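(* Let $\mathbb{F}$ be a field, $m,k,d,d'\in\mathbb{N}$, and $G,K,L$ finite subsets of $\mathbb{F}$ with $K\subseteq L$, $d'\ge|G|-2$ and $|K|=d+1$. Let $S\subseteq\mathbb{F}^{m+k}$ be a finite set and suppose there exist matrices $C\in\mathbb{F}^{L^m\times\ell}$ and $D\in\mathbb{F}^{S\times\ell}$ such that for all $Z\in\mathbb{F}^{\le d,\le d'}[X_1,\dots,X_m,Y_1,\dots,Y_k]$ and all $i\in\{1,\dots,\ell\}$, $$\sum_{\vec\alpha\in L^m}C_{\vec\alpha,i}\sum_{\vec y\in G^k}Z(\vec\alpha,\vec y)=\sum_{\vec q\in S}D_{\vec q,i}\,Z(\vec q).$$ Then $|S|\ge \mathrm{rank}(BC)\cdot\big(\min\{d'-|G|+2,\ |G|\}\big)^k$, where $B\in\mathbb{F}^{K^m\times L^m}$ is the matrix such that for every $\vec\alpha\in L^m$ and every polynomial $p\in\mathbb{F}[X_1,\dots,X_m]$ of individual degree at most $d$, $p(\vec\alpha)=\sum_{\vec\beta\in K^m}B_{\vec\beta,\vec\alpha}\,p(\vec\beta)$.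
   Context: $\mathbb{F}^{\le d,\le d'}[X_1,\dots,X_m,Y_1,\dots,Y_k]$ denotes the set of $(m+k)$-variate polynomials over $\mathbb{F}$ of individual degree at most $d$ in each of $X_1,\dots,X_m$ and at most $d'$ in each of $Y_1,\dots,Y_k$. Matrices indexed by sets $A\times B$ have rows indexed by $A$ and columns by $B$. *)

(* Defs.v *)
From HB Require Import structures.
From mathcomp Require Import all_boot all_order all_algebra.
Set Implicit Arguments. Unset Strict Implicit. Unset Printing Implicit Defensive.
Import Order.TTheory GRing.Theory Num.Theory.
Local Open Scope ring_scope.

(* Index type of the grid s^n for a finite set s (given as a uniq seq):
   an n-tuple of positions in s. *)
Definition gridIdx (n : nat) (F : Type) (s : seq F) := {ffun 'I_n -> 'I_(size s)}.

Definition gridPt (F : nzRingType) (n : nat) (s : seq F) (a : gridIdx n s) : 'I_n -> F :=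
  fun j => nth 0 s (a j).

(* Polynomials in n variables of individual degree <= dg, given by their
   coefficient family (one coefficient per exponent vector in {0..dg}^n). *)
Definition mpoly_ideg (F : nzRingType) (n dg : nat) := {ffun {ffun 'I_n -> 'I_dg.+1} -> F}.

Definition mpeval (F : nzRingType) (n dg : nat) (p : mpoly_ideg F n dg) (x : 'I_n -> F) : F :=
  \sum_(e : {ffun 'I_n -> 'I_dg.+1}) p e * \prod_(j < n) x j ^+ e j.

(* Polynomials in F^{<=d,<=d'}[X_1..X_m,Y_1..Y_k]: coefficient per exponent
   pair (eX in {0..d}^m, eY in {0..d'}^k). *)
Definition mpoly2 (F : nzRingType) (m k d d' : nat) :=
  {ffun ({ffun 'I_m -> 'I_d.+1} * {ffun 'I_k -> 'I_d'.+1}) -> F}.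

Definition mpeval2 (F : nzRingType) (m k d d' : nat) (Z : mpoly2 F m k d d')
  (x : 'I_m -> F) (y : 'I_k -> F) : F :=
  \sum_(e : {ffun 'I_m -> 'I_d.+1} * {ffun 'I_k -> 'I_d'.+1})
     Z e * ((\prod_(j < m) x j ^+ e.1 j) * (\prod_(j < k) y j ^+ e.2 j)).

(* Evaluation at a point q of F^{m+k} (first m coordinates are X, last k are Y). *)
Definition mpeval2_pt (F : nzRingType) (m k d d' : nat) (Z : mpoly2 F m k d d')
  (q : 'rV[F]_(m + k)) : F :=
  mpeval2 Z (fun j => q 0 (lshift k j)) (fun j => q 0 (rshift m j)).

(* Main.v *)
Require Import Defs.
From HB Require Import structures.
From mathcomp Require Import all_boot all_order all_algebra.
From mathcomp Require Import zify ring.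
Import GRing.Theory.
Local Open Scope ring_scope.


Definition lagP {F : fieldType} (s : seq F) (u : nat) : {poly F} :=
  \prod_(j < size s | (j : nat) != u) ('X - (nth 0 s j)%:P).
Definition lag {F : fieldType} (s : seq F) (u : nat) : {poly F} :=
  ((lagP s u).[nth 0 s u]^-1)%:P * lagP s u.

Lemma lag_eval {F : fieldType} (s : seq F) (u w : nat) : uniq s -> (u < size s)%N -> (w < size s)%N ->
  (lag s u).[nth 0 s w] = (u == w)%:R.
Proof.
move=> us hu hw; rewrite /lag hornerM hornerC.
have [<-|neq] := altP eqP.
  rewrite mulVf // /lagP horner_prod; apply/prodf_neq0 => j hj.
  by rewrite !hornerE subr_eq0 nth_uniq // eq_sym.
rewrite /lagP [X in _ * X]horner_prod [X in _ * X](bigD1 (Ordinal hw)) 1?eq_sym //=.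
by rewrite !hornerE subrr /= mulr0 mul0r.
Qed.

Lemma size_lag {F : fieldType} (s : seq F) (u : nat) : (u < size s)%N -> (size (lag s u) <= size s)%N.
Proof.
move=> hu; rewrite /lag.
apply: (leq_trans (size_polyMleq _ _)).
have H1 := size_polyC_leq1 ((lagP s u).[nth 0 s u]^-1).
suff H2 : (size (lagP s u) <= size s)%N by move: H1 H2; set a := size _; set b := size _; lia.
rewrite /lagP size_prod; last by move=> j _; rewrite polyXsubC_eq0.
rewrite (eq_bigr (fun=> 2%N)); last by move=> j _; rewrite size_XsubC.
rewrite sum_nat_const.
have -> : #|[pred j : 'I_(size s) | (j : nat) != u]| = (size s).-1.
  rewrite -[in RHS](card_ord (size s)) -(cardC1 (Ordinal hu)); apply: eq_card => j /=.
  by rewrite !inE.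
case: (size s) hu => // n _ /=; lia.
Qed.

Definition mprod {F : fieldType} (n dg : nat) (P : 'I_n -> {poly F}) : mpoly_ideg F n dg :=
  [ffun e : {ffun 'I_n -> 'I_dg.+1} => \prod_i (P i)`_(e i)].
Arguments mprod {F n} dg P.

Lemma mprodE {F : fieldType} (n dg : nat) (P : 'I_n -> {poly F}) :
  (forall i, (size (P i) <= dg.+1)%N) ->
  forall x, mpeval (mprod dg P) x = \prod_i (P i).[x i].
Proof.
move=> H x; rewrite /mpeval /mprod.
transitivity (\sum_(e : {ffun 'I_n -> 'I_dg.+1}) \prod_i ((P i)`_(e i) * x i ^+ e i)).
  by apply: eq_bigr => e _; rewrite ffunE -big_split.
rewrite -(bigA_distr_bigA (fun (i:'I_n) (j:'I_dg.+1) => (P i)`_j * x i ^+ j)) /=; apply: eq_bigr => i _.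
by rewrite (horner_coef_wide _ (H i)).
Qed.

Lemma repr2 {F : fieldType} (m k d d' : nat) (I : finType) (v : I -> F) (P : I -> mpoly_ideg F m d)
  (Q : I -> mpoly_ideg F k d') :
  exists Z : mpoly2 F m k d d', forall x y,
    mpeval2 Z x y = \sum_t v t * (mpeval (P t) x * mpeval (Q t) y).
Proof.
exists [ffun e : {ffun 'I_m -> 'I_d.+1} * {ffun 'I_k -> 'I_d'.+1} =>
   \sum_t v t * (P t e.1 * Q t e.2)] => x y.
rewrite /mpeval2 /mpeval.
under eq_bigr do rewrite ffunE big_distrl.
rewrite exchange_big /=; apply: eq_bigr => t _.
rewrite big_distrl /= big_distrr /=.
rewrite -(pair_bigA _ (fun (a : {ffun 'I_m -> 'I_d.+1}) (b : {ffun 'I_k -> 'I_d'.+1}) =>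
  v t * (P t a * Q t b) * ((\prod_(j < m) x j ^+ a j) * \prod_(j < k) y j ^+ b j))) /=.
apply: eq_bigr => a _; rewrite big_distrr /= big_distrr /=; apply: eq_bigr => b _.
ring.
Qed.

Lemma prod_ind {F : fieldType} (n N : nat) (c c' : {ffun 'I_n -> 'I_N}) :
  \prod_i (((c i : nat) == c' i)%:R : F) = (c == c')%:R.
Proof.
have [->|ne] := eqVneq c c'.
  by apply: big1 => i _; rewrite eqxx.
have [i hi] : exists i, c i != c' i.
  apply/existsP; apply: contraR ne => /existsPn h; apply/eqP/ffunP => i.
  by have := h i; rewrite negbK => /eqP.
have hi' : ((c i : nat) == c' i) = false by apply/negbTE.
by rewrite (bigD1 i) //= hi' mul0r.
Qed.

Lemma sum_ordT {F : fieldType} (T0 : finType) (R : Type) (idx : R) (op : Monoid.com_law idx)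
  (G0 : 'I_#|T0| -> R) :
  \big[op/idx]_(t : 'I_#|T0|) G0 t = \big[op/idx]_(a : T0) G0 (enum_rank a).
Proof.
apply: reindex; exists enum_val => x _; [exact: enum_rankK | exact: enum_valK].
Qed.

Theorem lemma8p1 (F : fieldType) (m k d d' l : nat) (G K L : seq F)
  (S : seq 'rV[F]_(m + k))
  (C : 'M[F]_(#|{: gridIdx m L}|, l)) (D : 'M[F]_(size S, l))
  (B : 'M[F]_(#|{: gridIdx m K}|, #|{: gridIdx m L}|)) :
  uniq G -> uniq K -> uniq L -> uniq S ->
  {subset K <= L} ->
  (size G - 2 <= d')%N ->
  size K = d.+1 ->
  (* defining property of B *)
  (forall (p : mpoly_ideg F m d) (a : gridIdx m L),
      mpeval p (gridPt a) =
      \sum_(b : gridIdx m K) B (enum_rank b) (enum_rank a) * mpeval p (gridPt b)) ->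
  (* the hypothesis on C and D *)
  (forall (Z : mpoly2 F m k d d') (i : 'I_l),
      \sum_(a : gridIdx m L) C (enum_rank a) i *
         \sum_(g : gridIdx k G) mpeval2 Z (gridPt a) (gridPt g)
      = \sum_(q < size S) D q i * mpeval2_pt Z (nth 0 S q)) ->
  (\rank (B *m C) * (minn (d'.+2 - size G) (size G)) ^ k <= size S)%N.
Proof.
move=> uG uK uL uS sKL hG hK HB HCD.
set A := B *m C.
set r := \rank A.
set t := minn (d'.+2 - size G) (size G).
have ht1 : (t <= size G)%N by rewrite /t; lia.
have ht2 : ((t + size G).-1 <= d'.+1)%N by rewrite /t; lia.
have sT : size (take t G) = t by rewrite size_takel.
have uT : uniq (take t G) by apply: take_uniq.
pose f := maxrankfun A.
pose bj (j : 'I_r) : gridIdx m K := enum_val (f j).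
pose T := ('I_r * {ffun 'I_k -> 'I_t})%type.
pose pxv (j : 'I_r) (x : 'I_m -> F) := \prod_ii (lag K (bj j ii)).[x ii].
pose hyv (c : {ffun 'I_k -> 'I_t}) (y : 'I_k -> F) := \prod_ii (lag (take t G) (c ii)).[y ii].
pose Myv (c : {ffun 'I_k -> 'I_t}) (y : 'I_k -> F) := \prod_ii (lag G (c ii)).[y ii].
pose xs (q : 'I_(size S)) := fun j => (nth 0 S q) 0 (lshift k j).
pose ys (q : 'I_(size S)) := fun j => (nth 0 S q) 0 (rshift m j).
pose U : 'M[F]_(#|{: T}|, size S) :=
  \matrix_(tau, q) (pxv (enum_val tau).1 (xs q) * hyv (enum_val tau).2 (ys q)).
have cardT : #|{: T}| = (r * t ^ k)%N by rewrite card_prod card_ffun !card_ord.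
rewrite -cardT.
suff frU : row_free U by rewrite -(eqP frU); exact: rank_leq_col.
have sizeX : forall j ii, (size (lag K (bj j ii)) <= d.+1)%N.
  by move=> j ii; rewrite -hK; apply: size_lag; rewrite ?hK ?ltn_ord.
have sizeY : forall (c c0 : {ffun 'I_k -> 'I_t}) ii,
    (size (lag (take t G) (c ii) * lag G (c0 ii))%R <= d'.+1)%N.
  move=> c c0 ii; have h0 := size_polyMleq (lag (take t G) (c ii)) (lag G (c0 ii)).
  have h1 : (size (lag (take t G) (c ii)) <= t)%N.
    have hc : ((c ii : nat) < size (take t G))%N by rewrite sT.
    by have := size_lag _ _ hc; rewrite sT.
  have h2 : (size (lag G (c0 ii)) <= size G)%N.
    by apply: size_lag; apply: leq_trans ht1.
  lia.
have KY : forall c c0 : {ffun 'I_k -> 'I_t},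
    \sum_(g : gridIdx k G) \prod_ii (lag (take t G) (c ii) * lag G (c0 ii)).[gridPt g ii]
    = (c == c0)%:R.
  move=> c c0; rewrite /gridPt /gridIdx.
  rewrite -(bigA_distr_bigA (fun (ii:'I_k) (w:'I_(size G)) =>
     (lag (take t G) (c ii) * lag G (c0 ii)).[nth 0 G w])) /=.
  rewrite -(@prod_ind F _ _ c c0); apply: eq_bigr => ii _.
  have hc0 : ((c0 ii : nat) < size G)%N by apply: leq_trans ht1.
  rewrite (bigD1 (widen_ord ht1 (c0 ii))) //= big1 => [|w hw].
    rewrite hornerM (lag_eval _ _ _ uG) //= eqxx mulr1 addr0.
    rewrite -(nth_take 0 (ltn_ord (c0 ii)) G) lag_eval // ?sT //.
  rewrite hornerM (lag_eval _ _ _ uG) //=.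
  have -> : ((c0 ii : nat) == w) = false.
    by apply/negbTE; apply: contra hw => /eqP h; apply/eqP/val_inj; rewrite /= h.
  by rewrite mulr0.
have KX : forall (j : 'I_r) (a : gridIdx m L), pxv j (gridPt a) = B (f j) (enum_rank a).
  move=> j a.
  have ME := mprodE _ _ _ (sizeX j).
  rewrite /pxv -ME HB (bigD1 (bj j)) //= big1 => [|b hb].
    rewrite ME big1 => [|ii _]; last first.
      by rewrite /gridPt lag_eval ?eqxx // hK.
    by rewrite mulr1 addr0 /bj enum_valK.
  rewrite ME.
  have -> : \prod_ii (lag K (bj j ii)).[gridPt b ii] = ((bj j == b)%:R : F).
    rewrite -(@prod_ind F _ _ (bj j) b); apply: eq_bigr => ii _.
    by rewrite /gridPt lag_eval // hK.
  by rewrite eq_sym (negbTE hb) mulr0.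
apply: inj_row_free => v hv.
apply/rowP => tau; rewrite !mxE.
have -> : tau = enum_rank (enum_val tau) by rewrite enum_valK.
move: (enum_val tau) => [j0 c0].
pose w : 'rV[F]_r := \row_j v 0 (enum_rank ((j, c0) : T)).
suff w0 : w = 0 by move/rowP: w0 => /(_ j0); rewrite !mxE.
apply: (row_free_inj (maxrowsub_free A)); rewrite /= mul0mx.
apply/rowP => i; rewrite !mxE.
have [Z hZ] := @repr2 F m k d d' _ (fun tau : 'I_#|{: T}| => v 0 tau)
  (fun tau => mprod d (fun ii => lag K (bj (enum_val tau).1 ii)))
  (fun tau => mprod d' (fun ii => lag (take t G) ((enum_val tau).2 ii) * lag G (c0 ii))).
have HZ := HCD Z i.
have R0 : \sum_(q < size S) D q i * mpeval2_pt Z (nth 0 S q) = 0.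
  apply: big1 => q _; rewrite /mpeval2_pt hZ.
  have hq := hv; move/rowP: hq => /(_ q); rewrite !mxE => hq.
  suff -> : \sum_tau v 0 tau *
      (mpeval (mprod d (fun ii => lag K (bj (enum_val tau).1 ii))) (xs q) *
       mpeval (mprod d' (fun ii => lag (take t G) ((enum_val tau).2 ii) * lag G (c0 ii))) (ys q))
     = (\sum_tau v 0 tau * U tau q) * Myv c0 (ys q).
    by rewrite hq mul0r mulr0.
  rewrite mulr_suml; apply: eq_bigr => tau1 _.
  rewrite mxE (mprodE _ _ _ (sizeX _)) (mprodE _ _ _ (sizeY _ c0)).
  rewrite /pxv /hyv /Myv -!mulrA; congr (_ * (_ * _)); rewrite -big_split.
  by apply: eq_bigr => ii _; rewrite hornerM.
rewrite R0 in HZ.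
have L0 : forall a : gridIdx m L, \sum_(g : gridIdx k G) mpeval2 Z (gridPt a) (gridPt g)
   = \sum_j v 0 (enum_rank ((j, c0) : T)) * B (f j) (enum_rank a).
  move=> a; under eq_bigr do rewrite hZ.
  rewrite exchange_big /=.
  transitivity (\sum_tau v 0 tau * (pxv (enum_val tau).1 (gridPt a) * ((enum_val tau).2 == c0)%:R)).
    apply: eq_bigr => tau1 _; rewrite -big_distrr /= -big_distrr /= (mprodE _ _ _ (sizeX _)) -KY.
    congr (_ * (_ * _)); apply: eq_bigr => g _; rewrite (mprodE _ _ _ (sizeY _ c0)).
    done.
  rewrite (@sum_ordT F T).
  under eq_bigr do rewrite enum_rankK.
  rewrite (eq_bigr (fun p : T => (fun j c => v 0 (enum_rank ((j, c) : T)) *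
       (pxv j (gridPt a) * (c == c0)%:R)) p.1 p.2)); last by case.
  rewrite -(pair_bigA _ (fun j c => v 0 (enum_rank ((j, c) : T)) *
       (pxv j (gridPt a) * (c == c0)%:R))) /=.
  apply: eq_bigr => j _; rewrite (bigD1 c0) //= big1 => [|c hc]; last first.
    by rewrite (negbTE hc) mulr0 mulr0.
  by rewrite eqxx mulr1 addr0 KX.
rewrite -[X in _ = X]HZ /A.
under eq_bigr => j _ do rewrite !mxE (@sum_ordT F (gridIdx m L)) big_distrr.
rewrite exchange_big /=; apply: eq_bigr => a _; rewrite L0 big_distrr /=.
apply: eq_bigr => j _; rewrite /f; ring.
Qed.
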